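(* In the Euclidean plane $\mathbb R^2$, let $\mu\neq 0$ and let $\gamma$ be a critical curve of $\mathbf{\Theta}_\mu$ whose first-integral constant $d$ (defined by $\mu^4\kappa_s^2=d\,e^{-2\mu\kappa}-(\mu\kappa-1)^2$) is positive. Then for every $\lambda>0$, the dilation $\widetilde\gamma(s)=\lambda\gamma(s/\lambda)$ is a critical curve of $\mathbf{\Theta}_{\lambda\mu}$ whose first-integral constant is positive (indeed equal to $d$).
   Context: A critical curve of $\mathbf{\Theta}_\mu=\int_\gamma e^{\mu\kappa}ds$ in $\mathbb R^2$ is an arc-length parametrized curve whose signed curvature satisfies $\frac{d^2}{ds^2}(e^{\mu\kappa})+(\kappa^2-\kappa/\mu)e^{\mu\kappa}=0$. *)

(* Defs.v *)
From Stdlib Require Import Reals.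
From Coquelicot Require Import Coquelicot.
Open Scope R_scope.

Definition smooth (f : R -> R) : Prop := forall (n : nat) (s : R), ex_derive_n f n s.

Definition arclength (x y : R -> R) : Prop :=
  forall s, (Derive x s)^2 + (Derive y s)^2 = 1.

Definition curvature (x y : R -> R) (s : R) : R :=
  Derive x s * Derive_n y 2 s - Derive y s * Derive_n x 2 s.

(* critical curve of Theta_mu = int e^{mu kappa} ds:
   smooth arc-length parametrized curve with
   (e^{mu kappa})'' + (kappa^2 - kappa/mu) e^{mu kappa} = 0 *)
Definition critical_curve (mu : R) (x y : R -> R) : Prop :=
  smooth x /\ smooth y /\ arclength x y /\
  forall s,
    Derive_n (fun t => exp (mu * curvature x y t)) 2 s
    + ((curvature x y s)^2 - curvature x y s / mu) * exp (mu * curvature x y s) = 0.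

Definition first_integral_constant (mu : R) (x y : R -> R) (d : R) : Prop :=
  forall s,
    mu^4 * (Derive (curvature x y) s)^2
    = d * exp (-2 * mu * curvature x y s) - (mu * curvature x y s - 1)^2.

Definition dilate (lam : R) (f : R -> R) : R -> R := fun s => lam * f (s / lam).

(* Main.v *)
Require Import Defs.
From Stdlib Require Import Reals Lra Lia.
From Coquelicot Require Import Coquelicot.
Open Scope R_scope.

Lemma dil_ext (lam : R) (f : R -> R) : lam <> 0 ->
  forall t, dilate lam f t = lam * f (/lam * t).
Proof. intros H t; unfold dilate; unfold Rdiv; rewrite (Rmult_comm t); reflexivity. Qed.

Lemma dil_exn lam f : lam <> 0 -> smooth f -> smooth (dilate lam f).
Proof.
  intros H Hf n s.
  apply (ex_derive_n_ext (fun t => lam * f (/lam * t))).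
  { intros t; rewrite dil_ext; auto. }
  apply ex_derive_n_scal_l.
  apply ex_derive_n_comp_scal.
  apply filter_forall; intros; apply Hf.
Qed.

Lemma dil_Dn lam f n s : lam <> 0 -> smooth f ->
  Derive_n (dilate lam f) n s = lam * (/lam)^n * Derive_n f n (/lam * s).
Proof.
  intros H Hf.
  rewrite (Derive_n_ext _ (fun t => lam * f (/lam * t))).
  2:{ intros t; rewrite dil_ext; auto. }
  rewrite Derive_n_scal_l.
  rewrite (Derive_n_comp_scal f).
  - ring.
  - apply filter_forall; intros; apply Hf.
Qed.

Lemma dil_curv lam x y t : lam <> 0 -> smooth x -> smooth y ->
  curvature (dilate lam x) (dilate lam y) t = /lam * curvature x y (/lam * t).
Proof.
  intros H Hx Hy. unfold curvature.
  change (Derive (dilate lam x) t) with (Derive_n (dilate lam x) 1 t).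
  change (Derive (dilate lam y) t) with (Derive_n (dilate lam y) 1 t).
  rewrite !dil_Dn; auto.
  change (Derive_n x 1) with (Derive x).
  change (Derive_n y 1) with (Derive y).
  field; auto.
Qed.

Section K.
Variables x y : R -> R.
Hypothesis Hx : smooth x.
Hypothesis Hy : smooth y.

Lemma ex_k t : ex_derive (curvature x y) t.
Proof.
  unfold curvature.
  apply (ex_derive_minus (fun s => Derive x s * Derive_n y 2 s)
                         (fun s => Derive y s * Derive_n x 2 s));
  apply ex_derive_mult.
  exact (Hx 2%nat t). exact (Hy 3%nat t). exact (Hy 2%nat t). exact (Hx 3%nat t).
Qed.

Lemma Dk t : Derive (curvature x y) t =
  Derive_n x 2 t * Derive_n y 2 t + Derive x t * Derive_n y 3 t
  - (Derive_n y 2 t * Derive_n x 2 t + Derive y t * Derive_n x 3 t).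
Proof.
  unfold curvature.
  rewrite (Derive_minus (fun s => Derive x s * Derive_n y 2 s)
                         (fun s => Derive y s * Derive_n x 2 s)).
  2:{ apply ex_derive_mult. exact (Hx 2%nat t). exact (Hy 3%nat t). }
  2:{ apply ex_derive_mult. exact (Hy 2%nat t). exact (Hx 3%nat t). }
  rewrite !Derive_mult.
  - reflexivity.
  - exact (Hy 2%nat t).
  - exact (Hx 3%nat t).
  - exact (Hx 2%nat t).
  - exact (Hy 3%nat t).
Qed.

Lemma ex_Dk t : ex_derive (Derive (curvature x y)) t.
Proof.
  apply (ex_derive_ext (fun t =>
  Derive_n x 2 t * Derive_n y 2 t + Derive x t * Derive_n y 3 t
  - (Derive_n y 2 t * Derive_n x 2 t + Derive y t * Derive_n x 3 t))).
  { intros; rewrite Dk; reflexivity. }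
  apply (ex_derive_minus (fun t => Derive_n x 2 t * Derive_n y 2 t + Derive x t * Derive_n y 3 t)
     (fun t => Derive_n y 2 t * Derive_n x 2 t + Derive y t * Derive_n x 3 t)).
  - apply (ex_derive_plus (fun t => Derive_n x 2 t * Derive_n y 2 t) (fun t => Derive x t * Derive_n y 3 t));
    apply ex_derive_mult;
    first [exact (Hx 2%nat t) | exact (Hx 3%nat t) | exact (Hx 4%nat t)
        | exact (Hy 2%nat t) | exact (Hy 3%nat t) | exact (Hy 4%nat t)].
  - apply (ex_derive_plus (fun t => Derive_n y 2 t * Derive_n x 2 t) (fun t => Derive y t * Derive_n x 3 t));
    apply ex_derive_mult;
    first [exact (Hx 2%nat t) | exact (Hx 3%nat t) | exact (Hx 4%nat t)
        | exact (Hy 2%nat t) | exact (Hy 3%nat t) | exact (Hy 4%nat t)].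
Qed.

Lemma ex_E mu (k : nat) t : (k <= 2)%nat ->
  ex_derive_n (fun t => exp (mu * curvature x y t)) k t.
Proof.
  intros Hk.
  destruct k as [|[|[|k]]]; simpl; try exact I; try lia.
  - auto_derive. apply ex_k.
  - apply (ex_derive_ext (fun t => mu * Derive (curvature x y) t * exp (mu * curvature x y t))).
    { intros s. symmetry. apply is_derive_unique. auto_derive.
      apply ex_k. rewrite Rmult_1_l; reflexivity. }
    apply ex_derive_mult. apply ex_derive_mult. auto_derive; auto. apply ex_Dk.
    auto_derive. apply ex_k.
Qed.
End K.

Theorem proposition4p1 :
  forall (mu : R) (x y : R -> R) (d : R),
    mu <> 0 ->
    critical_curve mu x y ->
    first_integral_constant mu x y d ->
    0 < d ->
    forall lam : R, 0 < lam ->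
      critical_curve (lam * mu) (dilate lam x) (dilate lam y) /\
      first_integral_constant (lam * mu) (dilate lam x) (dilate lam y) d /\
      0 < d.
Proof.
  intros mu x y d Hmu [Hx [Hy [Ha Heq]]] Hfi Hd lam Hlam.
  assert (Hl : lam <> 0) by lra.
  assert (HE : forall s, Derive_n (fun t => exp (lam * mu * curvature (dilate lam x) (dilate lam y) t)) 2 s
     = (/lam)^2 * Derive_n (fun t => exp (mu * curvature x y t)) 2 (/lam * s)).
  { intros s.
    rewrite (Derive_n_ext _ (fun t => (fun t => exp (mu * curvature x y t)) (/lam * t))).
    2:{ intros t. rewrite dil_curv; auto. f_equal. field. auto. }
    rewrite (Derive_n_comp_scal (fun t => exp (mu * curvature x y t))). reflexivity.
    apply filter_forall; intros. apply ex_E; auto. }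
  assert (HDk : forall s, Derive (curvature (dilate lam x) (dilate lam y)) s
     = /lam * (/lam * Derive (curvature x y) (/lam * s))).
  { intros s.
    rewrite (Derive_ext _ (fun t => /lam * curvature x y (/lam * t))).
    2:{ intros t. apply dil_curv; auto. }
    rewrite Derive_scal. f_equal.
    change (Derive (fun t => curvature x y (/lam * t)) s) with
      (Derive_n (fun t => curvature x y (/lam * t)) 1 s).
    rewrite (Derive_n_comp_scal (curvature x y)). simpl. rewrite Rmult_1_r; reflexivity.
    apply filter_forall; intros. destruct k as [|[|k]]; simpl; auto; try lia.
    apply ex_k; auto. }
  split; [|split; [|exact Hd]].
  - split; [apply dil_exn; auto|].
    split; [apply dil_exn; auto|].
    split.
    + intros s.
      change (Derive (dilate lam x) s) with (Derive_n (dilate lam x) 1 s).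
      change (Derive (dilate lam y) s) with (Derive_n (dilate lam y) 1 s).
      rewrite !dil_Dn; auto.
      rewrite <- (Ha (/lam * s)). simpl. change (fun x0 : R => x x0) with x; change (fun x0 : R => y x0) with y. field. auto.
    + intros s. rewrite HE, dil_curv; auto.
      specialize (Heq (/lam * s)).
      replace (lam * mu * (/ lam * curvature x y (/ lam * s))) with (mu * curvature x y (/ lam * s))
        by (field; auto).
      transitivity ((/lam)^2 * (Derive_n (fun t : R => exp (mu * curvature x y t)) 2 (/ lam * s) +
       (curvature x y (/ lam * s) ^ 2 - curvature x y (/ lam * s) / mu) *
       exp (mu * curvature x y (/ lam * s)))).
      field. auto.
      rewrite Heq. ring.
  - intros s. rewrite HDk, dil_curv; auto.
    specialize (Hfi (/lam * s)).
    replace (lam * mu * (/ lam * curvature x y (/ lam * s))) with (mu * curvature x y (/ lam * s))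
        by (field; auto).
    replace (-2 * (lam * mu) * (/ lam * curvature x y (/ lam * s))) with (-2 * mu * curvature x y (/ lam * s))
        by (field; auto).
    rewrite <- Hfi. field. auto.
Qed.
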